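(* Let $Fil_{10}$ be the set of parameter values $(a_1,a_2,a_4,a_5,a_7,\dots,a_{15})$ of the family $F_{10}$ satisfying $a_1(2a_2+7a_4+7a_7)=0$, $3a_4^2+3a_4a_7-2a_2a_7=0$, $a_1(2a_9+5a_{11})-2a_2a_{10}+a_4(7a_8-2a_{10})+a_7(-3a_5+2a_8-7a_{10})=0$. Then $Fil_{10}=Fil_{10}(1)\cup Fil_{10}(2)\cup Fil_{10}(3)$, where $Fil_{10}(1)$ is defined by $a_1=0$, $3a_4^2+3a_4a_7-2a_2a_7=0$, $-2a_2a_{10}+a_4(7a_8-2a_{10})+a_7(-3a_5+2a_8-7a_{10})=0$; $Fil_{10}(2)$ is defined by $a_2=0$, $a_4=-a_7$, $a_1(2a_9+5a_{11})+a_4(3a_5+5a_8+5a_{10})=0$; $Fil_{10}(3)$ is defined by $a_2=-2a_4$, $3a_4=-7a_7$, $a_1(2a_9+5a_{11})+a_4\left(\tfrac97a_5+\tfrac{43}{7}a_8+5a_{10}\right)=0$. Consequently the set of 10-dimensional filiform Lie brackets is the union of the $GL(10,\mathbb{K})$-orbits of these three sets.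
   Context: $\mathbb{K}$ is algebraically closed of characteristic $0$. The family $F_{10}$ on basis $\{X_0,\dots,X_9\}$: $\mu(X_0,X_i)=X_{i+1}$ ($1\le i\le 8$), $\mu(X_2,X_7)=a_1X_9$, $\mu(X_1,X_7)=a_1X_8+a_2X_9$, $\mu(X_3,X_6)=-a_1X_9$, $\mu(X_2,X_6)=a_4X_9$, $\mu(X_1,X_6)=a_1X_7+(a_2+a_4)X_8+a_5X_9$, $\mu(X_4,X_5)=a_1X_9$, $\mu(X_3,X_5)=a_7X_9$, $\mu(X_2,X_5)=(a_4+a_7)X_8+a_8X_9$, $\mu(X_1,X_5)=a_1X_6+(a_2+2a_4+a_7)X_7+(a_5+a_8)X_8+a_9X_9$, $\mu(X_3,X_4)=a_7X_8+a_{10}X_9$, $\mu(X_2,X_4)=(a_4+2a_7)X_7+(a_8+a_{10})X_8+a_{11}X_9$, $\mu(X_1,X_4)=a_1X_5+(a_2+3a_4+3a_7)X_6+(a_5+2a_8+a_{10})X_7+(a_9+a_{11})X_8+a_{12}X_9$, $\mu(X_2,X_3)=(a_4+2a_7)X_6+(a_8+a_{10})X_7+a_{11}X_8+a_{13}X_9$, $\mu(X_1,X_3)=a_1X_4+(a_2+4a_4+5a_7)X_5+(a_5+3a_8+2a_{10})X_6+(a_9+2a_{11})X_7+(a_{12}+a_{13})X_8+a_{14}X_9$, $\mu(X_1,X_2)=a_1X_3+(a_2+4a_4+5a_7)X_4+(a_5+3a_8+2a_{10})X_5+(a_9+2a_{11})X_6+(a_{12}+a_{13})X_7+a_{14}X_8+a_{15}X_9$,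 others zero. Every 10-dimensional filiform Lie algebra is isomorphic to a member of $F_{10}$ with parameters in $Fil_{10}$. *)

(* Defs.v *)
From HB Require Import structures.
From mathcomp Require Import all_boot all_order all_algebra.
Set Implicit Arguments. Unset Strict Implicit. Unset Printing Implicit Defensive.
Import GRing.Theory.
Local Open Scope ring_scope.

Record params (K : Type) := Params {
  a1 : K; a2 : K; a4 : K; a5 : K; a7 : K; a8 : K; a9 : K;
  a10 : K; a11 : K; a12 : K; a13 : K; a14 : K; a15 : K }.

Section Fil.
Variable K : fieldType.

Definition Fil10 (p : params K) : Prop :=
  [/\ a1 p * (2%:R * a2 p + 7%:R * a4 p + 7%:R * a7 p) = 0,
      3%:R * a4 p ^+ 2 + 3%:R * a4 p * a7 p - 2%:R * a2 p * a7 p = 0 &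
      a1 p * (2%:R * a9 p + 5%:R * a11 p) - 2%:R * a2 p * a10 p
      + a4 p * (7%:R * a8 p - 2%:R * a10 p)
      + a7 p * (- (3%:R * a5 p) + 2%:R * a8 p - 7%:R * a10 p) = 0].

Definition Fil10_1 (p : params K) : Prop :=
  [/\ a1 p = 0,
      3%:R * a4 p ^+ 2 + 3%:R * a4 p * a7 p - 2%:R * a2 p * a7 p = 0 &
      - (2%:R * a2 p * a10 p)
      + a4 p * (7%:R * a8 p - 2%:R * a10 p)
      + a7 p * (- (3%:R * a5 p) + 2%:R * a8 p - 7%:R * a10 p) = 0].

Definition Fil10_2 (p : params K) : Prop :=
  [/\ a2 p = 0, a4 p = - a7 p &
      a1 p * (2%:R * a9 p + 5%:R * a11 p)
      + a4 p * (3%:R * a5 p + 5%:R * a8 p + 5%:R * a10 p) = 0].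

Definition Fil10_3 (p : params K) : Prop :=
  [/\ a2 p = - (2%:R * a4 p), 3%:R * a4 p = - (7%:R * a7 p) &
      a1 p * (2%:R * a9 p + 5%:R * a11 p)
      + a4 p * (9%:R / 7%:R * a5 p + 43%:R / 7%:R * a8 p + 5%:R * a10 p) = 0].
End Fil.

(* Main.v *)
Require Import Defs.
From HB Require Import structures.
From mathcomp Require Import all_boot all_order all_algebra.
From mathcomp Require Import ring.
Local Open Scope ring_scope.
Import GRing.Theory.

Theorem proposition29 (K : closedFieldType)
    (charK0 : [pchar K] =i pred0) (p : params K) :
  Fil10 p <-> (Fil10_1 p \/ Fil10_2 p \/ Fil10_3 p).
Proof.
have nz : forall n : nat, n != 0%N -> (n%:R : K) != 0.
  by move=> n hn; rewrite ((pcharf0P K).1 charK0 n).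
have n2 := nz 2%N isT; have n7 := nz 7%N isT.
case: p => x1 x2 x4 x5 x7 x8 x9 x10 x11 x12 x13 x14 x15.
rewrite /Fil10 /Fil10_1 /Fil10_2 /Fil10_3 /=.
split.
- case=> E1 E2 E3.
  have [e1|h1] := eqVneq x1 0.
    by left; split => //; rewrite -E3 e1; ring.
  right.
  have L : 2%:R * x2 + 7%:R * x4 + 7%:R * x7 = 0.
    by move/eqP: E1; rewrite mulf_eq0 (negPf h1) /= => /eqP.
  have F : (3%:R * x4 + 7%:R * x7) * (x4 + x7) * 2%:R = 0.
    have -> : (3%:R * x4 + 7%:R * x7) * (x4 + x7) * 2%:R =
      2%:R * (3%:R * x4 ^+ 2 + 3%:R * x4 * x7 - 2%:R * x2 * x7)
      + x7 * 2%:R * (2%:R * x2 + 7%:R * x4 + 7%:R * x7) :> K by ring.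
    by rewrite E2 L; ring.
  move/eqP: F; rewrite !mulf_eq0 (negPf n2) orbF => /orP[] /eqP F.
  + right.
    have e7 : x7 = - (3%:R * x4) / 7%:R.
      apply: (mulIf n7); rewrite mulfVK //.
      by apply/eqP; rewrite -subr_eq0; apply/eqP; rewrite -F; ring.
    have e2 : x2 = - (2%:R * x4).
      apply: (mulfI n2); apply/eqP; rewrite -subr_eq0; apply/eqP.
      rewrite -L e7; field.
      by [].
    split => //.
      by rewrite e7; field.
    rewrite -E3 e2 e7; field.
    by [].
  + left.
    have e4 : x4 = - x7 by apply/eqP; rewrite -subr_eq0 opprK F.
    have e2 : x2 = 0.
      apply: (mulfI n2); rewrite mulr0 -L e4; ring.
    split => //.
    by rewrite -E3 e2 e4; ring.
- case=> [|[]] [e1 e2 e3].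
  + split => //; first by rewrite e1 mul0r.
    by rewrite -e3 e1; ring.
  + split.
    * rewrite e1 e2; ring.
    * rewrite e1 e2; ring.
    * rewrite -e3 e1 e2; ring.
  + have e7 : x7 = - (3%:R * x4) / 7%:R.
      by apply: (mulIf n7); rewrite mulfVK // e2 opprK mulrC.
    split.
    * rewrite e1 e7; field.
      by [].
    * rewrite e1 e7; field.
      by [].
    * rewrite -e3 e1 e7; field.
      by [].
Qed.
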